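(* Let $d \ge 3$ and $s\ge 2$, $t$ be integers with either ($s = 2$ and $t \geq 6$) or ($s \geq 3$ and $t \geq 7$). Then every subgraph of $W_d(s)$ isomorphic to $F_t$ contains exactly one hub vertex of $W_d(s)$.
   Context: For $d \ge 3$ and $s \ge 1$, the $s$-hubbed wheel $W_d(s) = \overline{K_s} + C_d$ has vertex set $\{u_1,\dots,u_s\} \cup \{v_1,\dots,v_d\}$ (hub vertices $u_a$ and boundary vertices $v_i$), where $v_1v_2\cdots v_dv_1$ is a cycle, the hub vertices are pairwise non-adjacent, and every $u_a$ is adjacent to every $v_i$. The fan $F_t$ ($t\ge 3$) is the graph obtained from a cycle $v_1v_2\cdots v_tv_1$ by adding all chords $v_1v_i$, $3 \le i \le t-1$. *)

(* Defs.v *)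
From mathcomp Require Import all_boot.
Set Implicit Arguments. Unset Strict Implicit. Unset Printing Implicit Defensive.

(* Adjacency of the cycle 0 - 1 - ... - (n-1) - 0 on 'I_n (vertex v_{i+1} is i). *)
Definition cyc_adj (n : nat) : rel 'I_n :=
  fun i j => (val j == (val i).+1 %% n) || (val i == (val j).+1 %% n).

Definition wheel_adj (s d : nat) : rel ('I_s + 'I_d) :=
  fun x y => match x, y with
  | inl _, inr _ => true
  | inr _, inl _ => true
  | inr i, inr j => cyc_adj i j
  | inl _, inl _ => false
  end.

Definition is_hub (s d : nat) (x : 'I_s + 'I_d) : bool :=
  if x is inl _ then true else false.

(* The fan F_t on 'I_t: cycle v_1 ... v_t v_1 plus chords v_1 v_i, 3 <= i <= t-1
   (vertex v_k is represented by k-1). *)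
Definition fan_adj (t : nat) : rel 'I_t :=
  fun x y => [|| cyc_adj x y,
                 (val x == 0) && (2 <= val y <= t - 2)
               | (val y == 0) && (2 <= val x <= t - 2)].

(* f realises a subgraph of W_d(s) isomorphic to F_t: f is an injective map of
   the vertices of F_t sending edges of F_t to edges of W_d(s). The subgraph is
   (image of f, image of the edges). *)
Definition fan_copy (s d t : nat) (f : 'I_t -> 'I_s + 'I_d) : Prop :=
  injective f /\ forall x y : 'I_t, fan_adj x y -> wheel_adj (f x) (f y).

(* Main.v *)
Require Import Defs.
From mathcomp Require Import all_boot.
From mathcomp Require Import zify.

Lemma nb_vals d (i j : 'I_d) : cyc_adj i j ->
  val j = (val i).+1 %% d \/ val j = (val i + d).-1 %% d.
Proof.
rewrite /cyc_adj => /orP [/eqP->|/eqP e]; [by left | right].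
have hj := ltn_ord j; have hi := ltn_ord i.
case: (ltnP j.+1 d) => hjd.
- rewrite modn_small // in e. by rewrite e addSn /= modnDr modn_small.
- have jd : j.+1 = d by lia.
  rewrite jd modnn in e. rewrite e add0n modn_small; [|rewrite ltn_predL; lia]. by rewrite -[in RHS]jd.
Qed.

Lemma three_nb d (i j1 j2 j3 : 'I_d) : cyc_adj i j1 -> cyc_adj i j2 -> cyc_adj i j3 ->
  j1 = j2 \/ j1 = j3 \/ j2 = j3.
Proof.
move=> /nb_vals H1 /nb_vals H2 /nb_vals H3.
have [e|[e|e]] : val j1 = val j2 \/ val j1 = val j3 \/ val j2 = val j3 by lia.
- by left; apply: val_inj.
- by right; left; apply: val_inj.
- by right; right; apply: val_inj.
Qed.

Lemma three_hub (h1 h2 h3 : 'I_2) : h1 = h2 \/ h1 = h3 \/ h2 = h3.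
Proof.
have [e|[e|e]] : h1 = h2 :> nat \/ h1 = h3 :> nat \/ h2 = h3 :> nat.
  by have:= ltn_ord h1; have:=ltn_ord h2; have:=ltn_ord h3; lia.
- by left; apply: val_inj.
- by right; left; apply: val_inj.
- by right; right; apply: val_inj.
Qed.

Lemma apex_adj t (x y : 'I_t) : val x = 0 -> 0 < val y -> fan_adj x y.
Proof.
move=> x0; rewrite /fan_adj /cyc_adj x0 /=; case: y => n hy /= y0.
case: (leqP 2 n) => y2; case: (leqP n (t - 2)) => yt; rewrite ?andbT ?andbF ?orbT ?orbF //=.
- have -> : n.+1 = t by lia. by rewrite modnn eqxx orbT.
- have -> : n = 1 by lia. by rewrite modn_small ?eqxx //; lia.
- have -> : n = 1 by lia. by rewrite modn_small ?eqxx //; lia.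
Qed.

Lemma path_adj t (x y : 'I_t) : val y = (val x).+1 -> fan_adj x y.
Proof.
move=> e; rewrite /fan_adj /cyc_adj -e modn_small ?eqxx //; exact: ltn_ord.
Qed.

Ltac tri inj :=
  match goal with
  | H1 : is_true (cyc_adj ?i ?a), H2 : is_true (cyc_adj ?i ?b),
    H3 : is_true (cyc_adj ?i ?c) |- _ =>
    case: (@three_nb _ _ _ _ _ H1 H2 H3) => [e|[e|e]]; subst;
    match goal with
    | E : ?f ?x = ?v, E' : ?f ?y = ?v |- _ =>
      lazymatch x with y => fail | _ =>
      by have := congr1 (@nat_of_ord _) (inj _ _ (etrans E (esym E'))) end
    end
  end.

Ltac trih inj :=
  match goal with
  | E1 : ?f ?x1 = inl ?a, E2 : ?f ?x2 = inl ?b, E3 : ?f ?x3 = inl ?c |- _ =>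
    case: (three_hub a b c) => [e|[e|e]]; subst;
    match goal with
    | E : ?f ?x = ?v, E' : ?f ?y = ?v |- _ =>
      lazymatch x with y => fail | _ =>
      by have := congr1 (@nat_of_ord _) (inj _ _ (etrans E (esym E'))) end
    end
  end.

Theorem lemma2p4 (d s t : nat) :
  3 <= d -> 2 <= s ->
  (s = 2 /\ 6 <= t) \/ (3 <= s /\ 7 <= t) ->
  forall f : 'I_t -> 'I_s + 'I_d,
    fan_copy f ->
    #|[set x in codom f | is_hub x]| = 1.
Proof.
move=> hd hs ht f [inj adj].
have t6 : 5 < t by case: ht => [][] _; lia.
pose o0 := Ordinal (ltn_trans (isT : 0 < 5) t6).
have A : forall y : 'I_t, 0 < val y -> wheel_adj (f o0) (f y).
  by move=> y y0; apply: adj; apply: apex_adj.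
case E0: (f o0) => [h0 | i].
  have -> : [set x in codom f | is_hub x] = [set f o0].
    apply/setP => x; rewrite !inE; apply/andP/eqP.
    - case=> /codomP [y ->]; case: (posnP (val y)) => y0.
        by have -> : y = o0 by apply: val_inj.
      by have := A y y0; rewrite E0; case: (f y).
    - by move=> ->; rewrite codom_f E0.
  by rewrite cards1.
exfalso.
pose o1 := Ordinal (ltn_trans (isT : 1 < 5) t6).
pose o2 := Ordinal (ltn_trans (isT : 2 < 5) t6).
pose o3 := Ordinal (ltn_trans (isT : 3 < 5) t6).
pose o4 := Ordinal (ltn_trans (isT : 4 < 5) t6).
pose o5 := Ordinal t6.
have A1 := A o1 isT; have A2 := A o2 isT; have A3 := A o3 isT.
have A4 := A o4 isT; have A5 := A o5 isT.
have P1 := adj o1 o2 (@path_adj _ o1 o2 (erefl _)).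
have P2 := adj o2 o3 (@path_adj _ o2 o3 (erefl _)).
have P3 := adj o3 o4 (@path_adj _ o3 o4 (erefl _)).
have P4 := adj o4 o5 (@path_adj _ o4 o5 (erefl _)).
rewrite E0 in A1 A2 A3 A4 A5.
case: ht => [[es t6'] | [s3 t7]].
- subst s.
  move: A1 A2 A3 A4 A5 P1 P2 P3 P4.
  case E1: (f o1) => [h1|j1]; case E2: (f o2) => [h2|j2];
  case E3: (f o3) => [h3|j3]; case E4: (f o4) => [h4|j4];
  case E5: (f o5) => [h5|j5] => //= A1 A2 A3 A4 A5 P1 P2 P3 P4;
  first [tri inj | trih inj].
- pose o6 := Ordinal t7.
  have A6 := A o6 isT.
  have P5 := adj o5 o6 (@path_adj _ o5 o6 (erefl _)).
  rewrite E0 in A6.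
  move: A1 A2 A3 A4 A5 A6 P1 P2 P3 P4 P5.
  case E1: (f o1) => [h1|j1]; case E2: (f o2) => [h2|j2];
  case E3: (f o3) => [h3|j3]; case E4: (f o4) => [h4|j4];
  case E5: (f o5) => [h5|j5]; case E6: (f o6) => [h6|j6]
    => //= A1 A2 A3 A4 A5 A6 P1 P2 P3 P4 P5;
  tri inj.
Qed.
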